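(* Let $r \colon B \to \mathbb{I}$ and let $m \colon A \rightarrowtail B$ be a monomorphism in $\widehat{\square}_\vee$. Then the map $r \hat{\times}_B m \colon M_r(m) \to \mathbb{I} \times B$ is a trivial cofibration, i.e. it has the left lifting property with respect to every fibration (every map with the right lifting property against all maps $\delta_k \hat{\times} m'$, $k\in\{0,1\}$, $m'$ a monomorphism).
   Context: Semilattices: sets with an associative, commutative, idempotent binary operation $\vee$; homomorphisms preserve $\vee$ (no bounds required). Let $\square_\vee$ (the semilattice cube category, equivalently the Lawvere theory of semilattices with constants $0,1$ satisfying $0\vee x=x$, $1\vee x=1$) be the category whose objects are the semilattices $[1]^n$ ($n\in\mathbb{N}$, $[1]=\{0<1\}$ with $\vee=\max$, pointwise structure) and whose morphisms are all semilattice homomorphisms between them. Fix a strongly inaccessible cardinal $\kappa$ and let $\widehat{\square}_\vee$ be the category of presheaves on $\square_\vee$ valued in $\kappa$-small sets. Let $\mathbb{I}$ be the representable presheaf on $[1]$, $\delta_k \colon 1 \to \mathbb{I}$ ($k\in\{0,1\}$) the endpoint inclusions, and $\varepsilon\colon \mathbb I\to 1$ the unique map. For maps $f\colon X\to Y$, $g\colon X'\to Y'$, the pushout product $f\hat\times g$ is the induced map $(X\times Y')\sqcup_{X\times X'}(Y\times X')\to Y\times Y'$. For $r\colon B\to\mathbb I$ and $f\colon A\to B$, the unbiased mapping cylinder $M_r(f)$ is the pushout of $f \colon A \to B$ and $\langle rf, \mathrm{id}_A\rangle \colon A \to \mathbb{I}\times A$, with induced maps $c_r\colon B\to M_r(f)$,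 $d_r\colon \mathbb I\times A\to M_r(f)$. For a mono $m\colon A\to B$, $r\hat\times_B m\colon M_r(m)\to \mathbb I\times B$ is the unique map restricting to $\langle r,\mathrm{id}_B\rangle$ on $B$ and to $\mathbb I\times m$ on $\mathbb I\times A$. *)

(* Defs.v *)
From mathcomp Require Import all_boot.
Set Implicit Arguments. Unset Strict Implicit. Unset Printing Implicit Defensive.

(* Object n = the semilattice [1]^n, carried by n-tuples of booleans with
   pointwise join (orb = max on {0<1}). *)
Definition cube (n : nat) : finType := (n.-tuple bool : finType).
Definition cjoin n (x y : cube n) : cube n := [tuple tnth x i || tnth y i | i < n].

(* Morphisms [1]^n -> [1]^m: all join-preserving maps (no bounds required). *)
Definition is_hom n m (f : {ffun cube n -> cube m}) : bool :=
  [forall x, [forall y, f (cjoin x y) == cjoin (f x) (f y)]].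
Definition hom n m := {f : {ffun cube n -> cube m} | is_hom f}.
Definition homf n m (f : hom n m) : cube n -> cube m := fun x => sval f x.

Lemma homf_join n m (f : hom n m) x y : homf f (cjoin x y) = cjoin (homf f x) (homf f y).
Proof. rewrite /homf; have /forallP /(_ x) /forallP /(_ y) /eqP := svalP f; exact. Qed.

Lemma is_hom_id n : is_hom [ffun x : cube n => x].
Proof. by apply/forallP=> x; apply/forallP=> y; rewrite !ffunE. Qed.
Definition idH n : hom n n := exist (@is_hom n n) _ (is_hom_id n).

Lemma is_hom_comp n m k (g : hom m k) (f : hom n m) :
  is_hom [ffun x => homf g (homf f x)].
Proof. by apply/forallP=> x; apply/forallP=> y; rewrite !ffunE !homf_join. Qed.
Definition compH n m k (g : hom m k) (f : hom n m) : hom n k :=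
  exist (@is_hom n k) _ (is_hom_comp g f).

Lemma compH1 n m (g : hom n m) : compH g (idH n) = g.
Proof. apply: val_inj; apply/ffunP=> x; by rewrite /= /homf /= !ffunE. Qed.
Lemma compHA n m k l (h : hom k l) (g : hom m k) (f : hom n m) :
  compH h (compH g f) = compH (compH h g) f.
Proof. by apply: val_inj; apply/ffunP=> x; rewrite /= /homf /= !ffunE. Qed.

(* ---------- Presheaves on □_∨ (valued in a fixed universe, playing the
   role of the κ-small sets for κ strongly inaccessible) ---------- *)
Record psh := Psh {
  ob : nat -> Type;
  act : forall n m, hom n m -> ob m -> ob n;
  act_id : forall n x, act (idH n) x = x;
  act_comp : forall n m k (g : hom m k) (f : hom n m) x,
      act (compH g f) x = act f (act g x) }.

Arguments act p {n m}.
Arguments Psh : clear implicits.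

Unset Implicit Arguments.
Record pmor (X Y : psh) := PMap {
  cmp : forall n, ob X n -> ob Y n;
  cmp_nat : forall n m (f : hom n m) x, cmp n (act X f x) = act Y f (cmp m x) }.
Set Implicit Arguments.
Arguments PMap {X Y}.
Arguments cmp {X Y}.
Arguments cmp_nat {X Y}.

Definition eqm X Y (f g : pmor X Y) : Prop := forall n x, cmp f n x = cmp g n x.

Definition idm (X : psh) : pmor X X := @PMap X X (fun n x => x) (fun _ _ _ _ => erefl).

Lemma compm_nat X Y Z (g : pmor Y Z) (f : pmor X Y) n m (h : hom n m) x :
  cmp g n (cmp f n (act X h x)) = act Z h (cmp g m (cmp f m x)).
Proof. by rewrite !cmp_nat. Qed.
Definition compm X Y Z (g : pmor Y Z) (f : pmor X Y) : pmor X Z :=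
  @PMap X Z (fun n x => cmp g n (cmp f n x)) (compm_nat g f).

Definition mono X Y (m : pmor X Y) : Prop :=
  forall (Z : psh) (g h : pmor Z X), eqm (compm m g) (compm m h) -> eqm g h.

Definition oneP : psh := @Psh (fun _ => unit) (fun _ _ _ x => x)
  (fun _ _ => erefl) (fun _ _ _ _ _ _ => erefl).

Definition Ih : psh := @Psh (fun n => hom n 1) (fun n m f g => compH g f)
  (fun n g => compH1 g) (fun n m k g f x => compHA x g f).

Definition prodP (X Y : psh) : psh := @Psh (fun n => (ob X n * ob Y n)%type)
  (fun n m f p => (act X f p.1, act Y f p.2))
  (fun n p => ltac:(by case: p => a b /=; rewrite !act_id))
  (fun n m k g f p => ltac:(by rewrite /= !act_comp)).

Lemma pairm_nat Z X Y (f : pmor Z X) (g : pmor Z Y) n m (h : hom n m) x :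
  (cmp f n (act Z h x), cmp g n (act Z h x)) = act (prodP X Y) h (cmp f m x, cmp g m x).
Proof. by rewrite !cmp_nat. Qed.
Definition pairm Z X Y (f : pmor Z X) (g : pmor Z Y) : pmor Z (prodP X Y) :=
  @PMap Z (prodP X Y) (fun n z => (cmp f n z, cmp g n z)) (pairm_nat f g).

Lemma prodm_nat X Y X' Y' (f : pmor X Y) (g : pmor X' Y') n m (h : hom n m) p :
  (cmp f n (act X h p.1), cmp g n (act X' h p.2)) =
  act (prodP Y Y') h (cmp f m p.1, cmp g m p.2).
Proof. by rewrite !cmp_nat. Qed.
Definition prodm X Y X' Y' (f : pmor X Y) (g : pmor X' Y') :
  pmor (prodP X X') (prodP Y Y') :=
  @PMap (prodP X X') (prodP Y Y') (fun n p => (cmp f n p.1, cmp g n p.2))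
    (prodm_nat f g).

Lemma is_hom_const n (k : bool) : is_hom [ffun _ : cube n => [tuple of [:: k]] : cube 1].
Proof.
apply/forallP=> x; apply/forallP=> y; rewrite !ffunE; apply/eqP.
by apply: eq_from_tnth => i; rewrite tnth_mktuple orbb.
Qed.
Definition constH n (k : bool) : hom n 1 := exist (@is_hom n 1) _ (is_hom_const n k).
Lemma delta_nat (k : bool) n m (h : hom n m) (x : ob oneP m) :
  constH n k = compH (constH m k) h.
Proof. apply: val_inj; apply/ffunP=> y; by rewrite /= /homf /= !ffunE. Qed.
Definition delta (k : bool) : pmor oneP Ih :=
  @PMap oneP Ih (fun n _ => constH n k) (@delta_nat k).

Definition isPushout (A B C P : psh) (f : pmor A B) (g : pmor A C)
  (i1 : pmor B P) (i2 : pmor C P) : Prop :=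
  eqm (compm i1 f) (compm i2 g) /\
  forall (Z : psh) (h1 : pmor B Z) (h2 : pmor C Z),
    eqm (compm h1 f) (compm h2 g) ->
    (exists h : pmor P Z, eqm (compm h i1) h1 /\ eqm (compm h i2) h2) /\
    (forall h h' : pmor P Z,
        eqm (compm h i1) h1 -> eqm (compm h i2) h2 ->
        eqm (compm h' i1) h1 -> eqm (compm h' i2) h2 -> eqm h h').

Definition isPushoutProduct (X Y X' Y' P : psh) (f : pmor X Y) (g : pmor X' Y')
  (i1 : pmor (prodP X Y') P) (i2 : pmor (prodP Y X') P) (q : pmor P (prodP Y Y')) : Prop :=
  isPushout (prodm (idm X) g) (prodm f (idm X')) i1 i2 /\
  eqm (compm q i1) (prodm f (idm Y')) /\
  eqm (compm q i2) (prodm (idm Y) g).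

Definition llp (A B X Y : psh) (i : pmor A B) (p : pmor X Y) : Prop :=
  forall (u : pmor A X) (v : pmor B Y), eqm (compm p u) (compm v i) ->
  exists l : pmor B X, eqm (compm l i) u /\ eqm (compm p l) v.

Definition fibration (X Y : psh) (p : pmor X Y) : Prop :=
  forall (k : bool) (A' B' : psh) (m' : pmor A' B'), mono m' ->
  forall (P : psh) (i1 : pmor (prodP oneP B') P) (i2 : pmor (prodP Ih A') P)
         (q : pmor P (prodP Ih B')),
    isPushoutProduct (delta k) m' i1 i2 q -> llp q p.

Definition trivial_cofibration (A B : psh) (i : pmor A B) : Prop :=
  forall (X Y : psh) (p : pmor X Y), fibration p -> llp i p.

(* Main.v *)
Require Import Defs.
From mathcomp Require Import all_boot.
From Stdlib Require Import ClassicalEpsilon ProofIrrelevance.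
Set Implicit Arguments. Unset Strict Implicit. Unset Printing Implicit Defensive.

Lemma sig_eq (T : Type) (P : T -> Prop) (x y : {t | P t}) : sval x = sval y -> x = y.
Proof. case: x => x px; case: y => y py /= E; subst y; f_equal; apply: proof_irrelevance. Qed.

Lemma cjoinACA n (a b c d : cube n) : cjoin (cjoin a b) (cjoin c d) = cjoin (cjoin a c) (cjoin b d).
Proof. apply: eq_from_tnth => i; rewrite !tnth_mktuple; exact: orbACA. Qed.

Lemma is_hom_join n (t s : hom n 1) : is_hom [ffun x => cjoin (homf t x) (homf s x)].
Proof.
apply/forallP=> x; apply/forallP=> y; rewrite !ffunE !homf_join; apply/eqP; exact: cjoinACA.
Qed.
Definition joinH n (t s : hom n 1) : hom n 1 := exist (@is_hom n 1) _ (is_hom_join t s).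

Lemma joinH_nat n m (t s : hom m 1) (f : hom n m) :
  compH (joinH t s) f = joinH (compH t f) (compH s f).
Proof. by apply: val_inj; apply/ffunP=> x; rewrite /= /homf /= !ffunE. Qed.

Lemma join_0l n (t : hom n 1) : joinH (constH n false) t = t.
Proof.
apply: val_inj; apply/ffunP=> x; rewrite /= ffunE /homf /= ffunE.
by apply: eq_from_tnth => i; rewrite tnth_mktuple (ord1 i).
Qed.
Lemma join_1l n (t : hom n 1) : joinH (constH n true) t = constH n true.
Proof.
apply: val_inj; apply/ffunP=> x; rewrite /= !ffunE /homf /= ffunE.
by apply: eq_from_tnth => i; rewrite tnth_mktuple (ord1 i).
Qed.

Definition yon (n : nat) : psh := @Psh (fun k => hom k n) (fun k l f g => compH g f)
  (fun k g => compH1 g) (fun k l j g f x => compHA x g f).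

Lemma mono_inj X Y (m : pmor X Y) : mono m -> forall n x y, cmp m n x = cmp m n y -> x = y.
Proof.
move=> Hm n x y Exy.
have natx : forall k l (h : hom k l) (f : ob (yon n) l),
  act X (compH f h) x = act X h (act X f x) by move=> *; rewrite act_comp.
have naty : forall k l (h : hom k l) (f : ob (yon n) l),
  act X (compH f h) y = act X h (act X f y) by move=> *; rewrite act_comp.
pose g := @PMap (yon n) X (fun k f => act X f x) natx.
pose h := @PMap (yon n) X (fun k f => act X f y) naty.
have := Hm (yon n) g h.
have E : eqm (compm m g) (compm m h).
  by move=> k f /=; rewrite !cmp_nat Exy.
move/(_ E n (idH n)) => /=; by rewrite !act_id.
Qed.

Lemma inj_mono X Y (m : pmor X Y) : (forall n x y, cmp m n x = cmp m n y -> x = y) -> mono m.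
Proof. by move=> Hi Z g h E n x; apply: Hi; apply: E. Qed.

Lemma glue (W Z X1 X2 : psh) (e1 : pmor X1 W) (e2 : pmor X2 W) (h1 : pmor X1 Z) (h2 : pmor X2 Z) :
  (forall n w, (exists x, cmp e1 n x = w) \/ (exists x, cmp e2 n x = w)) ->
  (forall n x x', cmp e1 n x = cmp e1 n x' -> cmp h1 n x = cmp h1 n x') ->
  (forall n x x', cmp e2 n x = cmp e2 n x' -> cmp h2 n x = cmp h2 n x') ->
  (forall n x x', cmp e1 n x = cmp e2 n x' -> cmp h1 n x = cmp h2 n x') ->
  exists h : pmor W Z, eqm (compm h e1) h1 /\ eqm (compm h e2) h2.
Proof.
move=> Hc H1 H2 H12.
pose F n (w : ob W n) : ob Z n :=
  match excluded_middle_informative (exists x, cmp e1 n x = w) with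
  | left P => cmp h1 n (proj1_sig (constructive_indefinite_description _ P))
  | right NP => cmp h2 n (proj1_sig (constructive_indefinite_description _
        (match Hc n w with or_introl P => False_ind _ (NP P) | or_intror P => P end)))
  end.
have F1 : forall n x, F n (cmp e1 n x) = cmp h1 n x.
  move=> n x; rewrite /F; case: excluded_middle_informative => [P|NP].
    case: constructive_indefinite_description => y /= Ey; exact: H1.
  by exfalso; apply: NP; exists x.
have F2 : forall n x, F n (cmp e2 n x) = cmp h2 n x.
  move=> n x; rewrite /F; case: excluded_middle_informative => [P|NP].
    case: constructive_indefinite_description => y /= Ey; apply: H12; by [].
  case: constructive_indefinite_description => y /= Ey; exact: H2.
have Fnat : forall n m (f : hom n m) w, F n (act W f w) = act Z f (F m w).
  move=> n m f w; case: (Hc m w) => -[x <-].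
    by rewrite -cmp_nat F1 F1 cmp_nat.
  by rewrite -cmp_nat F2 F2 cmp_nat.
exists (@PMap W Z F Fnat); split=> n x /=; [exact: F1 | exact: F2].
Qed.
Section PPsec.
Variables (k : bool) (A' B' : psh) (m' : pmor A' B').

Definition PPob n := {p : (hom n 1 * ob B' n)%type | p.1 = constH n k \/ exists a, cmp m' n a = p.2}.

Lemma PP_act_pf n l (f : hom n l) (x : PPob l) :
  (compH (sval x).1 f, act B' f (sval x).2).1 = constH n k \/
  exists a, cmp m' n a = (compH (sval x).1 f, act B' f (sval x).2).2.
Proof.
case: x => -[t y] /= [->|[a <-]]; first by left; rewrite (delta_nat k f tt).
by right; exists (act A' f a); rewrite cmp_nat.
Qed.
Definition PP_act n l (f : hom n l) (x : PPob l) : PPob n := exist _ _ (PP_act_pf f x).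

Lemma PP_act_id n x : PP_act (idH n) x = x.
Proof. apply: sig_eq; case: x => -[t y] _ /=; by rewrite compH1 act_id. Qed.
Lemma PP_act_comp n l j (g : hom l j) (f : hom n l) x :
  PP_act (compH g f) x = PP_act f (PP_act g x).
Proof. apply: sig_eq; case: x => -[t y] _ /=; by rewrite compHA act_comp. Qed.

Definition PP : psh := @Psh PPob PP_act PP_act_id PP_act_comp.

Lemma PPi1_nat n l (f : hom n l) (x : ob (prodP oneP B') l) :
  (exist _ (constH n k, (act (prodP oneP B') f x).2) (or_introl erefl) : ob PP n)
  = act PP f (exist _ (constH l k, x.2) (or_introl erefl)).
Proof. apply: sig_eq => /=; by rewrite -(delta_nat k f tt). Qed.
Definition PPi1 : pmor (prodP oneP B') PP :=
  @PMap (prodP oneP B') PP (fun n x => exist _ (constH n k, x.2) (or_introl erefl)) PPi1_nat.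

Definition PPi2_f n (x : ob (prodP Ih A') n) : ob PP n :=
  exist _ (x.1, cmp m' n x.2) (or_intror (ex_intro _ x.2 erefl)).
Lemma PPi2_nat n l (f : hom n l) (x : ob (prodP Ih A') l) :
  PPi2_f (act (prodP Ih A') f x) = act PP f (PPi2_f x).
Proof. apply: sig_eq => /=; by rewrite cmp_nat. Qed.
Definition PPi2 : pmor (prodP Ih A') PP := PMap PPi2_f PPi2_nat.

Lemma PPq_nat n l (f : hom n l) (x : ob PP l) :
  sval (act PP f x) = act (prodP Ih B') f (sval x).
Proof. by []. Qed.
Definition PPq : pmor PP (prodP Ih B') := @PMap PP (prodP Ih B') (fun n (x : PPob n) => sval x) PPq_nat.

Lemma PP_cover n (w : ob PP n) :
  (exists x, cmp PPi1 n x = w) \/ (exists x, cmp PPi2 n x = w).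
Proof.
case: w => -[t y] [/= Et|[a /= Ea]].
  left; exists (tt, y); apply: sig_eq => /=; by rewrite Et.
right; exists (t, a); apply: sig_eq => /=; by rewrite Ea.
Qed.

Hypothesis mm : mono m'.

Lemma PP_pushout : isPushoutProduct (delta k) m' PPi1 PPi2 PPq.
Proof.
split; last by split.
split; first by move=> n x; apply: sig_eq.
move=> Z h1 h2 E; split.
  apply: glue; first exact: PP_cover.
  - move=> n [u y] [u' y'] /(f_equal sval) /= [->]; by case: u; case: u'.
  - move=> n [t a] [t' a'] /(f_equal sval) /= [-> /(mono_inj mm) ->]; by [].
  - move=> n [u y] [t a] /(f_equal sval) /= [<- ->]; case: u.
    exact: (E n (tt, a)).
move=> h h' Eh1 Eh2 Eh1' Eh2' n w.
case: (PP_cover w) => -[x <-].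
  by have := Eh1 n x; have := Eh1' n x => /= -> ->.
by have := Eh2 n x; have := Eh2' n x => /= -> ->.
Qed.

End PPsec.
Section Main.
Variables (A B : psh) (r : pmor B Ih) (m : pmor A B) (M : psh)
  (c_r : pmor B M) (d_r : pmor (prodP Ih A) M) (q : pmor M (prodP Ih B)).
Hypotheses (Hm : mono m) (HPO : isPushout m (pairm (compm r m) (idm A)) c_r d_r)
  (Hq1 : eqm (compm q c_r) (pairm r (idm B))) (Hq2 : eqm (compm q d_r) (prodm (idm Ih) m)).

Lemma comm_cd n a : cmp c_r n (cmp m n a) = cmp d_r n (cmp r n (cmp m n a), a).
Proof. exact: (proj1 HPO n a). Qed.
Lemma q1 n b : cmp q n (cmp c_r n b) = (cmp r n b, b).
Proof. exact: Hq1. Qed.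
Lemma q2 n x : cmp q n (cmp d_r n x) = (x.1, cmp m n x.2).
Proof. exact: Hq2. Qed.

Definition Imob n := {mu : ob M n | (exists b, cmp c_r n b = mu) \/ (exists x, cmp d_r n x = mu)}.
Lemma Im_act_pf n l (f : hom n l) (x : Imob l) :
  (exists b, cmp c_r n b = act M f (sval x)) \/ (exists y, cmp d_r n y = act M f (sval x)).
Proof.
case: x => mu /= [[b Eb]|[y Ey]]; [left; exists (act B f b) | right; exists (act (prodP Ih A) f y)];
  by rewrite cmp_nat ?Eb ?Ey.
Qed.
Definition Im_act n l (f : hom n l) (x : Imob l) : Imob n := exist _ _ (Im_act_pf f x).
Lemma Im_act_id n x : Im_act (idH n) x = x.
Proof. apply: sig_eq; by rewrite /= act_id. Qed.
Lemma Im_act_comp n l j (g : hom l j) (f : hom n l) x :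
  Im_act (compH g f) x = Im_act f (Im_act g x).
Proof. apply: sig_eq; by rewrite /= act_comp. Qed.
Definition Im : psh := @Psh Imob Im_act Im_act_id Im_act_comp.

Lemma M_cover n (mu : ob M n) : (exists b, cmp c_r n b = mu) \/ (exists x, cmp d_r n x = mu).
Proof.
have c'nat : forall n l (f : hom n l) b,
  (exist _ (cmp c_r n (act B f b)) (or_introl (ex_intro _ _ erefl)) : ob Im n)
  = act Im f (exist _ (cmp c_r l b) (or_introl (ex_intro _ _ erefl))).
  by move=> *; apply: sig_eq; rewrite /= cmp_nat.
have d'nat : forall n l (f : hom n l) b,
  (exist _ (cmp d_r n (act (prodP Ih A) f b)) (or_intror (ex_intro _ _ erefl)) : ob Im n)
  = act Im f (exist _ (cmp d_r l b) (or_intror (ex_intro _ _ erefl))).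
  by move=> *; apply: sig_eq; rewrite /= cmp_nat.
pose c' := @PMap B Im _ c'nat.
pose d' := @PMap (prodP Ih A) Im _ d'nat.
have inat : forall n l (f : hom n l) (x : Imob l), sval (act Im f x) = act M f (sval x) by [].
pose inc := @PMap Im M (fun n (x : Imob n) => sval x) inat.
have [[h [Eh1 Eh2]] _] := proj2 HPO Im c' d' ltac:(by move=> k a; apply: sig_eq; exact: comm_cd).
have [_ U] := proj2 HPO M c_r d_r (proj1 HPO).
have E : eqm (compm inc h) (idm M).
  apply: U => // k x /=; [by have /= -> := Eh1 k x | by have /= -> := Eh2 k x].
have /= <- := E n mu; exact: (svalP (cmp h n mu)).
Qed.

Lemma q_inj n x y : cmp q n x = cmp q n y -> x = y.
Proof.
have cd : forall b t a, cmp q n (cmp c_r n b) = cmp q n (cmp d_r n (t, a)) ->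
    cmp c_r n b = cmp d_r n (t, a).
  move=> b t a; rewrite q1 q2 /= => -[Et Eb]; subst b t; exact: comm_cd.
case: (M_cover x) => -[x' <-]; case: (M_cover y) => -[y' <-].
- by rewrite !q1 => -[_ ->].
- case: y' => t a; exact: cd.
- case: x' => t a E; symmetry; apply: cd; by rewrite E.
- case: x' => t a; case: y' => t' a'; rewrite !q2 /= => -[-> /(mono_inj Hm) ->]; by [].
Qed.

Lemma q_mono : mono q.
Proof. apply: inj_mono; exact: q_inj. Qed.

Lemma main_lift (X Y : psh) (p : pmor X Y) : fibration p -> llp q p.
Proof.
move=> fib u v Huv.
have Huv' : forall n mu, cmp p n (cmp u n mu) = cmp v n (cmp q n mu) by move=> n mu; exact: Huv.
have h11nat : forall n l (f : hom n l) (x : ob (prodP oneP B) l),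
  cmp u n (cmp c_r n (act (prodP oneP B) f x).2) = act X f (cmp u l (cmp c_r l x.2)).
  by move=> *; rewrite /= !cmp_nat.
pose h11 := @PMap (prodP oneP B) X _ h11nat.
pose J1 n (x : ob (prodP Ih A) n) : ob (prodP Ih A) n := (joinH x.1 (cmp r n (cmp m n x.2)), x.2).
have J1nat : forall n l (f : hom n l) x, J1 n (act (prodP Ih A) f x) = act (prodP Ih A) f (J1 l x).
  by move=> n l f [t a]; rewrite /J1 /= !cmp_nat /= joinH_nat.
have h12nat : forall n l (f : hom n l) (x : ob (prodP Ih A) l),
  cmp u n (cmp d_r n (J1 n (act (prodP Ih A) f x))) = act X f (cmp u l (cmp d_r l (J1 l x))).
  by move=> *; rewrite J1nat !cmp_nat.
pose h12 := @PMap (prodP Ih A) X _ h12nat.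
have PO1 := PP_pushout false Hm.
have [[u1 [Eu11 Eu12]] _] := proj2 (proj1 PO1) X h11 h12
  ltac:(by move=> n [[] a] /=; rewrite /J1 /= join_0l comm_cd).
have vnat1 : forall n l (f : hom n l) (x : ob (prodP Ih B) l),
  cmp v n (joinH (act (prodP Ih B) f x).1 (cmp r n (act (prodP Ih B) f x).2), (act (prodP Ih B) f x).2)
  = act Y f (cmp v l (joinH x.1 (cmp r l x.2), x.2)).
  by move=> n l f [t b]; rewrite /= -cmp_nat /= cmp_nat /= joinH_nat.
pose v1 := @PMap (prodP Ih B) Y _ vnat1.
have [L1 [EL1q EL1p]] : exists L1 : pmor (prodP Ih B) X,
    eqm (compm L1 (PPq false m)) u1 /\ eqm (compm p L1) v1.
  apply: (fib false _ _ m Hm _ _ _ _ PO1) => n w.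
  case: (PP_cover w) => -[x <-].
    have /= -> := Eu11 n x; rewrite Huv' q1 /=; by rewrite join_0l.
  have /= -> := Eu12 n x; by rewrite Huv' q2.
have L1a : forall n b, cmp L1 n (constH n false, b) = cmp u n (cmp c_r n b).
  move=> n b; have /= := EL1q n (cmp (PPi1 false m) n (tt, b)) => ->.
  exact: (Eu11 n (tt, b)).
have L1b : forall n t a, cmp L1 n (t, cmp m n a) =
    cmp u n (cmp d_r n (joinH t (cmp r n (cmp m n a)), a)).
  move=> n t a; have /= := EL1q n (cmp (PPi2 false m) n (t, a)) => ->.
  exact: (Eu12 n (t, a)).
have L1p : forall n t b, cmp p n (cmp L1 n (t, b)) = cmp v n (joinH t (cmp r n b), b).
  move=> n t b; exact: (EL1p n (t, b)).
have h21nat : forall n l (f : hom n l) (x : ob (prodP oneP (prodP Ih B)) l),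
  cmp L1 n (constH n true, (act (prodP oneP (prodP Ih B)) f x).2.2)
  = act X f (cmp L1 l (constH l true, x.2.2)).
  move=> n l f x; rewrite -cmp_nat /=; by rewrite -(delta_nat true f tt).
pose h21 := @PMap (prodP oneP (prodP Ih B)) X _ h21nat.
have g2nat : forall n l (f : hom n l) (x : ob (prodP Ih (prodP Ih A)) l),
  cmp u n (cmp d_r n (joinH (act (prodP Ih (prodP Ih A)) f x).1 (act (prodP Ih (prodP Ih A)) f x).2.1,
                      (act (prodP Ih (prodP Ih A)) f x).2.2))
  = act X f (cmp u l (cmp d_r l (joinH x.1 x.2.1, x.2.2))).
  move=> n l f x; by rewrite -!cmp_nat /= joinH_nat.
pose g2 := @PMap (prodP Ih (prodP Ih A)) X _ g2nat.
have [h22 [Eh22a Eh22b]] := @glue _ _ _ _ (prodm (idm Ih) c_r) (prodm (idm Ih) d_r) L1 g2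
  ltac:(move=> n [s mu]; case: (M_cover mu) => -[x <-];
          [left; by exists (s, x) | right; by exists (s, x)])
  ltac:(move=> n [s b] [s' b'] /= [<- /(f_equal (cmp q n))]; rewrite !q1 => -[_ ->]; by [])
  ltac:(move=> n [s [t a]] [s' [t' a']] /= [<- /(f_equal (cmp q n))];
        rewrite !q2 /= => -[<- /(mono_inj Hm) <-]; by [])
  ltac:(move=> n [s b] [s' [t a]] /= [<- /(f_equal (cmp q n))];
        rewrite q1 q2 /= => -[<- ->]; exact: L1b).
have Eh22a' : forall n s b, cmp h22 n (s, cmp c_r n b) = cmp L1 n (s, b).
  move=> n s b; exact: (Eh22a n (s, b)).
have Eh22b' : forall n s x, cmp h22 n (s, cmp d_r n x) = cmp u n (cmp d_r n (joinH s x.1, x.2)).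
  move=> n s x; exact: (Eh22b n (s, x)).
have PO2 := PP_pushout true q_mono.
have [[u2 [Eu21 Eu22]] _] := proj2 (proj1 PO2) X h21 h22
  ltac:(move=> n [[] mu] /=; case: (M_cover mu) => -[x <-];
          [ by rewrite q1 Eh22a'
          | by case: x => t a; rewrite q2 Eh22b' L1b /= !join_1l ]).
have vnat2 : forall n l (f : hom n l) (x : ob (prodP Ih (prodP Ih B)) l),
  cmp v n (joinH (act (prodP Ih (prodP Ih B)) f x).1 (act (prodP Ih (prodP Ih B)) f x).2.1,
           (act (prodP Ih (prodP Ih B)) f x).2.2)
  = act Y f (cmp v l (joinH x.1 x.2.1, x.2.2)).
  move=> n l f x; by rewrite -!cmp_nat /= joinH_nat.
pose v2 := @PMap (prodP Ih (prodP Ih B)) Y _ vnat2.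
have [L2 [EL2q EL2p]] : exists L2 : pmor (prodP Ih (prodP Ih B)) X,
    eqm (compm L2 (PPq true q)) u2 /\ eqm (compm p L2) v2.
  apply: (fib true _ _ q q_mono _ _ _ _ PO2) => n w.
  case: (PP_cover w) => -[x <-].
    have /= -> := Eu21 n x; rewrite L1p /=; by rewrite !join_1l.
  have /= -> := Eu22 n x; case: x => s mu /=.
  case: (M_cover mu) => -[x <-].
    by rewrite Eh22a' L1p q1.
  by rewrite Eh22b' Huv' !q2.
have lnat : forall n l (f : hom n l) (x : ob (prodP Ih B) l),
  cmp L2 n (constH n false, act (prodP Ih B) f x) = act X f (cmp L2 l (constH l false, x)).
  move=> n l f x; rewrite -cmp_nat /=; by rewrite -(delta_nat false f tt).
exists (@PMap (prodP Ih B) X _ lnat); split => n x /=.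
  have /= -> := EL2q n (cmp (PPi2 true q) n (constH n false, x)).
  have /= -> := Eu22 n (constH n false, x).
  case: (M_cover x) => -[y <-].
    by rewrite Eh22a' L1a.
  by rewrite Eh22b' join_0l; case: y.
have /= -> := EL2p n (constH n false, x).
by rewrite join_0l; case: x.
Qed.
End Main.

Theorem mainTheorem2 (A B : psh) (r : pmor B Ih) (m : pmor A B) :
  mono m ->
  forall (M : psh) (c_r : pmor B M) (d_r : pmor (prodP Ih A) M),
    isPushout m (pairm (compm r m) (idm A)) c_r d_r ->
  forall (q : pmor M (prodP Ih B)),
    eqm (compm q c_r) (pairm r (idm B)) ->
    eqm (compm q d_r) (prodm (idm Ih) m) ->
    trivial_cofibration q.
Proof.
move=> Hm M c_r d_r HPO q Hq1 Hq2 X Y p fib.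
exact: (main_lift Hm HPO Hq1 Hq2 fib).
Qed.
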